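(* Let $n_1,n_2,n_3$ be distinct primes and let $k>1$ be an integer with $\gcd(k,n_i)=1$ for $i=1,2,3$, and suppose $n=n_1n_2n_3$ is a pseudoprime of basis $k$. Then for all $m,j\in\mathbb{N}$, $$\frac{k^{\,j\,|n_2n_3-n_1^{m}|}-1}{n_1}\in\mathbb{N},\qquad \frac{k^{\,j\,|n_1n_2-n_3^{m}|}-1}{n_3}\in\mathbb{N},\qquad \frac{k^{\,j\,|n_1n_3-n_2^{m}|}-1}{n_2}\in\mathbb{N}.$$
   Context: A positive integer $n$ is called a pseudoprime of basis $k$ (where $k>1$ is an integer) if $n$ is an odd composite number, $\gcd(n,k)=1$, and $k^{n-1}\equiv 1 \pmod n$. $\mathbb{N}$ denotes the positive integers. *)

(* Defs.v *)
From mathcomp Require Import all_boot.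

Definition absdiff (a b : nat) : nat := (a - b) + (b - a).

Definition pseudoprime (k n : nat) : Prop :=
  [/\ odd n, 1 < n, ~~ prime n, coprime n k & k ^ (n - 1) = 1 %[mod n]].

(* (a - 1)/d is a positive integer (an element of N = {1,2,...}). *)
Definition quot_in_N (a d : nat) : Prop :=
  exists q : nat, 0 < q /\ a - 1 = q * d.

(* Main.v *)
Require Import Defs.
From mathcomp Require Import all_boot.
From mathcomp Require Import cyclic.
From mathcomp Require Import zify.

Lemma ar1 X Y : 0 < Y -> Y <= X -> X - 1 - (X - Y) = Y - 1. Proof. lia. Qed.
Lemma ar2 X Y : Y <= X -> 0 < Y -> X - 1 = X - Y + (Y - 1). Proof. lia. Qed.
Lemma ar3 X Y : 0 < X -> 0 < Y -> Y - X + (X - Y) = Y - 1 - (X - 1) + (X - 1 - (Y - 1)). Proof. lia. Qed.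
Lemma ar4 X Y : Y != X -> 0 < Y - X + (X - Y). Proof. lia. Qed.

Lemma pow1_sub k p u v : k ^ u = 1 %[mod p] -> k ^ v = 1 %[mod p] ->
  k ^ (u - v) = 1 %[mod p].
Proof.
move=> Hu Hv; case: (leqP v u) => Hvu; last by rewrite (_ : u - v = 0) //; lia.
by rewrite -[k ^ (u - v)]muln1 -modnMmr -Hv modnMmr -expnD subnK // Hu Hv.
Qed.

Lemma pow1_add k p u v : k ^ u = 1 %[mod p] -> k ^ v = 1 %[mod p] ->
  k ^ (u + v) = 1 %[mod p].
Proof. by move=> Hu Hv; rewrite expnD -modnMml Hu modnMml -modnMmr Hv modnMmr muln1. Qed.

Lemma pow1_mul k p u c : k ^ u = 1 %[mod p] -> k ^ (u * c) = 1 %[mod p].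
Proof. by move=> Hu; rewrite expnM -modnXm Hu modnXm exp1n. Qed.

Arguments pow1_sub {k p u v}.
Arguments pow1_add {k p u v}.
Arguments pow1_mul {k p u} c.

Lemma key p a b k m j : prime p -> prime a -> prime b -> p != a -> p != b ->
  1 < k -> coprime k p -> k ^ (p * a * b - 1) = 1 %[mod p] -> 0 < m -> 0 < j ->
  quot_in_N (k ^ (j * absdiff (a * b) (p ^ m))) p.
Proof.
move=> pp pa pb npa npb k1 ckp Hpab m0 j0.
have p1 := prime_gt1 pp; have a1 := prime_gt1 pa; have b1 := prime_gt1 pb.
have F : k ^ (p - 1) = 1 %[mod p].
  by have := Euler_exp_totient ckp; rewrite totient_prime // subn1.
have Hab : k ^ (a * b - 1) = 1 %[mod p].
  have := pow1_sub Hpab (pow1_mul (a * b) F).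
  have -> : p * a * b - 1 - (p - 1) * (a * b) = a * b - 1.
    rewrite mulnBl mul1n -mulnA.
    have Y1 : 0 < a * b by rewrite muln_gt0 (ltnW a1) (ltnW b1).
    have YX : a * b <= p * (a * b) by rewrite leq_pmull // (ltnW p1).
    exact: ar1.
  done.
have Hpm : forall i, k ^ (p ^ i - 1) = 1 %[mod p].
  elim=> [|i IH]; first by rewrite subnn.
  have -> : p ^ i.+1 - 1 = (p - 1) * p ^ i + (p ^ i - 1).
    have h2 : 0 < p ^ i by rewrite expn_gt0 (ltnW p1).
    rewrite expnS mulnBl mul1n; apply: ar2 => //.
    by rewrite leq_pmull // (ltnW p1).
  exact: pow1_add (pow1_mul _ F) IH.
have pm0 : 0 < p ^ m by rewrite expn_gt0 (ltnW p1).
have Hd : absdiff (a * b) (p ^ m) = (a * b - 1 - (p ^ m - 1)) + (p ^ m - 1 - (a * b - 1)).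
  have : 0 < a * b by rewrite muln_gt0 (ltnW a1) (ltnW b1).
  by move=> h; rewrite /absdiff -ar3.
have He : k ^ (j * absdiff (a * b) (p ^ m)) = 1 %[mod p].
  have Habs : k ^ (absdiff (a * b) (p ^ m)) = 1 %[mod p].
    rewrite Hd; exact: pow1_add (pow1_sub Hab (Hpm m)) (pow1_sub (Hpm m) Hab).
  have := pow1_mul j Habs.
  by rewrite (mulnC j).
have Hne : a * b != p ^ m.
  apply/negP => /eqP E.
  have : p %| a * b by rewrite E; apply: dvdn_exp.
  rewrite Euclid_dvdM // !dvdn_prime2 //; by rewrite (negbTE npa) (negbTE npb).
have Dpos : 0 < absdiff (a * b) (p ^ m) by exact: ar4.
have Kpos : 1 < k ^ (j * absdiff (a * b) (p ^ m)).
  have : k ^ 1 <= k ^ (j * absdiff (a * b) (p ^ m)).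
    by rewrite leq_exp2l //; rewrite muln_gt0 j0 Dpos.
  by rewrite expn1 => h; exact: leq_trans k1 h.
have Hdv : p %| k ^ (j * absdiff (a * b) (p ^ m)) - 1.
  by rewrite -eqn_mod_dvd ?He // ltnW.
exists ((k ^ (j * absdiff (a * b) (p ^ m)) - 1) %/ p); split; last by rewrite divnK.
by rewrite divn_gt0 ?(prime_gt0 pp) //; apply: dvdn_leq => //; rewrite subn_gt0.
Qed.

Theorem mainTheorem4 (n1 n2 n3 k : nat) :
  prime n1 -> prime n2 -> prime n3 ->
  n1 != n2 -> n1 != n3 -> n2 != n3 ->
  1 < k ->
  coprime k n1 -> coprime k n2 -> coprime k n3 ->
  pseudoprime k (n1 * n2 * n3) ->
  forall m j : nat, 0 < m -> 0 < j ->
    [/\ quot_in_N (k ^ (j * absdiff (n2 * n3) (n1 ^ m))) n1,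
        quot_in_N (k ^ (j * absdiff (n1 * n2) (n3 ^ m))) n3 &
        quot_in_N (k ^ (j * absdiff (n1 * n3) (n2 ^ m))) n2].
Proof.
move=> p1 p2 p3 n12 n13 n23 k1 c1 c2 c3 [_ _ _ _ H] m j m0 j0.
have Hd : forall d, d %| n1 * n2 * n3 -> k ^ (n1 * n2 * n3 - 1) = 1 %[mod d].
  by move=> d dd; rewrite -(modn_dvdm _ dd) H modn_dvdm.
split.
- apply: key => //; apply: Hd; rewrite -mulnA; exact: dvdn_mulr.
- apply: key => //; first by rewrite eq_sym.
  + by rewrite eq_sym.
  + have -> : n3 * n1 * n2 = n1 * n2 * n3 by rewrite [RHS]mulnC mulnA.
    apply: Hd; exact: dvdn_mull.
- apply: key => //; first by rewrite eq_sym.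
  have -> : n2 * n1 * n3 = n1 * n2 * n3 by rewrite (mulnC n2).
  apply: Hd; rewrite -mulnA mulnCA; exact: dvdn_mulr.
Qed.
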